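(* For every $(\mathbf{j},y,x)\in\Sigma\times\mathbb{R}\times[0,1)$, every $n\in\mathbb{N}$ and every $r>0$, $$\mu_x\big(B^T_{(\mathbf{j},y,x)}(r)\cap\mathscr{P}^{n+1}(\mathbf{j},y,x)\big)=\frac1b\,\mu_{\frac{x+j_1}{b}}\Big(B^T_{G(\mathbf{j},y,x)}\big(\tfrac r\gamma\big)\cap\mathscr{P}^{n}\big(G(\mathbf{j},y,x)\big)\Big).$$
   Context: $b\ge2$ integer, $\gamma\in(0,1)$, $\phi$ a $\mathbb{Z}$-periodic Lipschitz function. $\Lambda=\{0,\dots,b-1\}$, $\Sigma=\Lambda^{\mathbb{Z}_+}$, $\nu$ uniform on $\Lambda$, $\sigma$ the left shift on $\Sigma$. $S(x,\mathbf{j})=\sum_{n\ge1}\gamma^{n-1}\phi\big(\frac{x+j_1+j_2b+\cdots+j_nb^{n-1}}{b^n}\big)$. $G(\mathbf{j},y,x)=\big(\sigma\mathbf{j},\ \frac{y-\phi(\frac{x+j_1}{b})}{\gamma},\ \frac{x+j_1}{b}\big)$. $\mu_x$ is the image of $\nu^{\mathbb{Z}_+}$ under $\mathbf{j}\mapsto(\mathbf{j},S(x,\mathbf{j}),x)$. $B^T_{(\mathbf{j},y,x)}(r)=\{(\mathbf{j}',y',x')\in\Sigma\times\mathbb{R}\times[0,1):|y-y'|\le r\}$. For $n\ge1$, $\mathscr{P}^n(\mathbf{j},y,x)=[j_1\cdots j_n]\times\mathbb{R}\times[0,1)$ where $[j_1\cdots j_n]$ is the cylinder of sequences starting with $j_1\cdots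 j_n$, and $\mathscr{P}^0(\mathbf{j},y,x)=\Sigma\times\mathbb{R}\times[0,1)$. *)

(* Defs.v *)
From HB Require Import structures.
From mathcomp Require Import all_boot all_order all_algebra.
From mathcomp Require Import all_classical all_reals.
From mathcomp Require Import topology normedtype sequences measure.
Unset Printing Implicit Defensive.
Import Order.TTheory GRing.Theory Num.Theory numFieldNormedType.Exports.
Local Open Scope ring_scope.
Local Open Scope classical_set_scope.

(* We write 'I_(b.-1.+1), which is
   'I_b whenever b >= 1 (the theorem assumes b >= 2); this makes the
   alphabet a pointed type, as required by [g_sigma_algebraType]. *)
Definition Lam (b : nat) := 'I_(b.-1.+1).
HB.instance Definition _ (b : nat) := Finite.on (Lam b).
HB.instance Definition _ (b : nat) := isPointed.Build (Lam b) ord0.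

(* Sigma = Lambda^{Z_+}; the sequence j = (j_1, j_2, ...) is encoded as
   j : nat -> Lam b with j 0 = j_1, j 1 = j_2, ... *)
Notation Sig b := (nat -> Lam b).

Definition cyl (b : nat) (m : nat) (w : Sig b) : set (Sig b) :=
  [set j | forall k, (k < m)%N -> j k = w k].

Definition cylinders (b : nat) : set (set (Sig b)) :=
  [set A | exists m w, A = cyl b m w].

Notation SigM b := (g_sigma_algebraType (cylinders b)).

Definition shift (b : nat) (j : Sig b) : Sig b := fun n => j n.+1.

Section defs.
Variable R : realType.

(* S(x,j) = sum_{n>=1} gamma^{n-1} phi((x + j_1 + j_2 b + ... + j_n b^{n-1})/b^n) *)
Definition Sfun (b : nat) (gamma : R) (phi : R -> R) (x : R) (j : Sig b) : R :=
  limn (series (fun n : nat =>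
    gamma ^+ n * phi ((x + \sum_(k < n.+1) (j k : nat)%:R * (b%:R) ^+ k)
                       / (b%:R) ^+ n.+1) : R) : nat -> R).

(* Points of Sigma x R x [0,1) are encoded as ((j, y), x). *)
Definition G (b : nat) (gamma : R) (phi : R -> R) (p : Sig b * R * R)
  : Sig b * R * R :=
  let: (j, y, x) := p in
  (shift b j, (y - phi ((x + (j 0%N : nat)%:R) / b%:R)) / gamma,
   (x + (j 0%N : nat)%:R) / b%:R).

(* mu_x : image of the uniform Bernoulli measure P on Sigma under
   j |-> (j, S(x,j), x). *)
Definition mu (b : nat) (gamma : R) (phi : R -> R)
  (P : set (SigM b) -> \bar R) (x : R) (A : set (Sig b * R * R)) : \bar R :=
  P [set j : SigM b | A (j, Sfun b gamma phi x j, x)].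

Definition BT (b : nat) (p : Sig b * R * R) (r : R) : set (Sig b * R * R) :=
  [set q | 0 <= q.2 < 1 /\ `|p.1.2 - q.1.2| <= r].

Definition Part (b : nat) (n : nat) (p : Sig b * R * R) : set (Sig b * R * R) :=
  [set q | 0 <= q.2 < 1 /\ cyl b n p.1.1 q.1.1].

End defs.

Arguments Sfun {R}.
Arguments G {R}.
Arguments mu {R}.
Arguments BT {R}.
Arguments Part {R}.

(* Main.v *)
Require Import Defs.
From HB Require Import structures.
From mathcomp Require Import all_boot all_order all_algebra.
From mathcomp Require Import all_classical all_reals.
From mathcomp Require Import topology normedtype sequences measure.
From mathcomp Require Import measurable_realfun lebesgue_stieltjes_measure interval_inference.
From mathcomp Require Import ring lra.
Import Order.TTheory GRing.Theory Num.Theory numFieldNormedType.Exports.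
Local Open Scope ring_scope.
Local Open Scope classical_set_scope.



Section finite_dep.
Variable b : nat.

Definition ext (N : nat) (v : {ffun 'I_N -> Lam b}) : Sig b :=
  fun k => odflt point (omap v (insub k)).

Arguments ext {N}.
Lemma extE N v k (hk : (k < N)%N) : ext v k = v (Ordinal hk).
Proof. by rewrite /ext insubT /=; congr (v _); apply: val_inj. Qed.

Lemma cyl_meas m w : measurable (cyl b m w : set (SigM b)).
Proof. by apply: sub_sigma_algebra; exists m, w. Qed.

Lemma dep_meas N (S : set (Sig b)) :
  (forall j j', (forall k, (k < N)%N -> j k = j' k) -> S j -> S j') ->
  measurable (S : set (SigM b)).
Proof.
move=> hS.
have -> : S = \bigcup_(v in [set v : {ffun 'I_N -> Lam b} | S (ext v)]) cyl b N (ext v).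
  apply/seteqP; split => [j Sj|j [v Sv cj]].
    exists [ffun i : 'I_N => j i] => /=.
      apply: hS Sj => k hk; by rewrite extE ffunE.
    by move=> k hk; rewrite extE ffunE.
  by apply: hS Sv => k hk; rewrite cj.
apply: fin_bigcup_measurable; first exact: finite_finset.
by move=> v _; apply: cyl_meas.
Qed.
End finite_dep.


Section key.
Variables (R : realType) (b : nat) (hb : (2 <= b)%N).
Variable (P : {measure set (SigM b) -> \bar R}).
Hypothesis hP : forall (m : nat) (w : Sig b),
      P (cyl b m w : set (SigM b)) = ((b%:R ^- m : R))%:E.

Definition scons (c : Lam b) (w : Sig b) : Sig b :=
  fun k => if k is k'.+1 then w k' else c.

Definition Gc : set (set (SigM b)) := cylinders b `|` [set set0].

Lemma mG : @measurable _ (SigM b) = <<s Gc >>.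
Proof.
apply/seteqP; split.
  apply: sub_sigma_algebra2 => A hA; by left.
apply: smallest_sub; first exact: smallest_sigma_algebra.
move=> A [hA|->]; first exact: sub_sigma_algebra.
exact: sigma_algebra0.
Qed.

Lemma cylI m w m' w' : (m <= m')%N ->
  cyl b m w `&` cyl b m' w' = cyl b m' w' \/ cyl b m w `&` cyl b m' w' = set0.
Proof.
move=> le.
have [h|h] := pselect (forall k, (k < m)%N -> w k = w' k).
  left; apply/seteqP; split => [j [] //|j hj]; split => // k hk.
  rewrite hj ?h //; exact: leq_trans hk le.
right; apply/seteqP; split => [j [h1 h2]|j //].
apply: h => k hk; rewrite -h1 // h2 //; exact: leq_trans hk le.
Qed.

Lemma GcI : setI_closed Gc.
Proof.
move=> A B [[m [w ->]]|->] [[m' [w' ->]]|->]; try by (right; rewrite ?set0I ?setI0).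
have [le|/ltnW le] := leqP m m'.
  by case: (cylI m w m' w' le) => ->; [left; exists m', w'|right].
by rewrite setIC; case: (cylI m' w' m w le) => ->; [left; exists m, w|right].
Qed.

Lemma shift_meas : measurable_fun [set: SigM b] (Defs.shift b : SigM b -> SigM b).
Proof.
apply: (@measurability _ _ (SigM b) (SigM b) _ _ (cylinders b)) => //.
move=> _ [_ [m [w ->]] <-].
apply: (@dep_meas b m.+1) => j j' hj [_ h]; split => // k hk.
by rewrite /Defs.shift -hj // -h.
Qed.

Variable c : Lam b.
Let D := cyl b 1 (fun _ => c) : set (SigM b).
Let mD : measurable D := @cyl_meas b 1 (fun _ => c).

Definition m1 : {measure set (SigM b) -> \bar R}.
refine (pushforward (mrestr P mD) (Defs.shift b : SigM b -> SigM b) : {measure set (SigM b) -> \bar R}).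
exact: shift_meas.
Defined.
Lemma m1E A : m1 A = P ((Defs.shift b @^-1` A) `&` D).
Proof. done. Qed.


Definition m2 : {measure set (SigM b) -> \bar R} := mscale ((b%:R^-1 : R)%:nng) P.

Lemma shiftI_cyl m w :
  (Defs.shift b @^-1` cyl b m w) `&` D = cyl b m.+1 (scons c w).
Proof.
apply/seteqP; split => [j [h1 h2]|j h].
  by case => [|k] hk /=; [exact: h2|exact: h1].
by split => [k hk|k hk]; [exact: (h k.+1)|case: k hk => // _; exact: (h 0%N)].
Qed.

Lemma key (A : set (SigM b)) : measurable A ->
  P [set j' : SigM b | j' 0%N = c /\ A (Defs.shift b j')] = ((b%:R^-1 : R)%:E * P A)%E.
Proof.
move=> mA.
have -> : [set j' : SigM b | j' 0%N = c /\ A (Defs.shift b j')] =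
   (Defs.shift b @^-1` A) `&` D.
  apply/seteqP; split => [j [h1 h2]|j [h1 h2]]; split => //.
    by case => // _.
  exact: (h2 0%N).
rewrite -m1E.
have b0 : (0 < b%:R :> R) by rewrite ltr0n; case: b hb.
transitivity (m2 A); last by [].
apply: (measure_unique Gc (fun _ => setT) mG GcI) => //.
- move=> _; left; exists 0%N, (fun _ => c); apply/seteqP; split => // j _ k //.
- by rewrite bigcup_const.
- move=> B [[m [w ->]]|->]; last by rewrite !measure0.
  rewrite m1E shiftI_cyl hP.
  transitivity ((b%:R^-1 : R)%:E * P (cyl b m w : set (SigM b)))%E; last by [].
  rewrite hP -EFinM; congr (_%:E).
  by rewrite (exprS (b%:R : R) m) invfM.
- move=> _; rewrite m1E preimage_setT setTI hP; exact: ltry.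
Qed.
End key.


Section ana.
Variables (R : realType) (b : nat) (hb : (2 <= b)%N) (gamma : R) (phi : R -> R).
Hypotheses (hgamma : 0 < gamma < 1)
  (hper : forall t : R, phi (t + 1) = phi t)
  (hlip : exists L : R, forall s t : R, `|phi s - phi t| <= L * `|s - t|).

Definition uterm (x : R) (j : Sig b) := fun n : nat =>
    gamma ^+ n * phi ((x + \sum_(k < n.+1) (j k : nat)%:R * (b%:R) ^+ k)
                       / (b%:R) ^+ n.+1).

Lemma SfunE x j : Sfun b gamma phi x j = limn (series (uterm x j)).
Proof. by []. Qed.

Lemma phi_nat t (n : nat) : phi (t + n%:R) = phi t.
Proof.
elim: n => [|n IH]; first by rewrite addr0.
by rewrite -natr1 addrA hper.
Qed.

Lemma phi_int t (z : int) : phi (t + z%:~R) = phi t.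
Proof.
case: z => n; first by rewrite phi_nat.
rewrite -(phi_nat _ n.+1); congr phi.
by rewrite NegzE mulrNz -addrA addNr addr0.
Qed.

Lemma phi_bound : exists M, 0 <= M /\ forall t, `|phi t| <= M.
Proof.
case: hlip => L hL; exists (`|phi 0| + `|L|); split => [|t].
  by rewrite addr_ge0.
set u := t - (Num.floor t)%:~R.
have -> : phi t = phi u by rewrite -(phi_int u (Num.floor t)) /u subrK.
have u0 : 0 <= u by rewrite /u subr_ge0 Num.Theory.floor_le.
have u1 : u < 1.
  have := Num.Theory.floorD1_gt t; rewrite intrD /u => h.
  by rewrite ltrBlDr addrC.
have := hL u 0; rewrite subr0 => h.
have h2 : L * `|u| <= `|L|.
  rewrite (ger0_norm u0); have := ler_norm L; have := normr_ge0 L; nra.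
have t1 := ler_normD (phi u - phi 0) (phi 0); rewrite subrK in t1.
lra.
Qed.

Lemma cvg_u x j : cvgn (series (uterm x j)).
Proof.
have [M [M0 hM]] := phi_bound.
have g0 : 0 <= gamma by case/andP: hgamma => /ltW.
apply: normed_cvg.
apply: (@series_le_cvg _ _ (geometric M gamma)).
- by move=> n /=.
- by move=> n /=; rewrite mulr_ge0 // exprn_ge0.
- move=> n /=; rewrite /uterm normrM ger0_norm ?exprn_ge0 // mulrC.
  by rewrite ler_wpM2r ?exprn_ge0.
- apply: is_cvg_geometric_series; rewrite ger0_norm //; by case/andP: hgamma.
Qed.

Lemma uterm_shift x j n :
  uterm x j n.+1 = gamma * uterm ((x + (j 0%N : nat)%:R) / b%:R) (Defs.shift b j) n.
Proof.
have b0 : (b%:R : R) != 0 by rewrite pnatr_eq0; case: b hb.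
rewrite /uterm exprS -mulrA; congr (_ * (_ * _)); congr phi.
rewrite big_ord_recl /= expr0 mulr1.
rewrite (eq_bigr (fun i : 'I_n.+1 => (Defs.shift b j i : nat)%:R * b%:R ^+ i * b%:R)); last first.
  by move=> i _; rewrite /Defs.shift /bump /= add1n exprSr mulrA.
rewrite -big_distrl /= exprS.
field.
by rewrite b0 expf_neq0.
Qed.

Lemma Sfun_shift x j : Sfun b gamma phi x j =
  phi ((x + (j 0%N : nat)%:R) / b%:R) +
  gamma * Sfun b gamma phi ((x + (j 0%N : nat)%:R) / b%:R) (Defs.shift b j).
Proof.
set x1 := (x + (j 0%N : nat)%:R) / b%:R.
rewrite !SfunE.
have hc := cvg_u x1 (Defs.shift b j).
apply: cvg_lim => //.
rewrite -cvg_shiftS.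
have -> : [sequence series (uterm x j) n.+1]_n =
    (fun n => uterm x j 0 + gamma * series (uterm x1 (Defs.shift b j)) n).
  apply/funext => n /=.
  rewrite /series /= big_nat_recl //; congr (_ + _).
  rewrite big_distrr /=; apply: eq_bigr => k _; exact: uterm_shift.
have -> : uterm x j 0 = phi x1.
  by rewrite /uterm /x1 big_ord1 !expr0 mulr1 mul1r expr1.
apply: cvgD; first exact: cvg_cst.
apply: cvgM; first exact: cvg_cst.
exact: hc.
Qed.

Lemma series_meas x m :
  measurable_fun [set: SigM b] (fun j : SigM b => series (uterm x j) m).
Proof.
move=> _ Y _; rewrite setTI.
apply: (@dep_meas b m) => j j' hj; rewrite /preimage /=.
suff -> : series (uterm x j') m = series (uterm x j) m by [].
rewrite /series /=; apply: eq_big_nat => k /andP[_ hk].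
rewrite /uterm; congr (_ * phi ((_ + _) / _)); apply: eq_bigr => i _.
by rewrite hj //; exact: leq_trans (ltn_ord i) hk.
Qed.

Lemma Sfun_meas x : measurable_fun [set: SigM b] (Sfun b gamma phi x : SigM b -> R).
Proof.
apply: (@measurable_fun_cvg _ _ _ _ (fun m (j : SigM b) => series (uterm x j) m)).
  by move=> m; exact: series_meas.
move=> j _; exact: (cvg_u x j).
Qed.
End ana.

Theorem lemma9p1 (R : realType) (b : nat) (gamma : R) (phi : R -> R)
  (hb : (2 <= b)%N) (hgamma : 0 < gamma < 1)
  (hper : forall t : R, phi (t + 1) = phi t)
  (hlip : exists L : R, forall s t : R, `|phi s - phi t| <= L * `|s - t|)
  (P : {measure set (SigM b) -> \bar R})
  (hP : forall (m : nat) (w : Sig b),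
      P (cyl b m w : set (SigM b)) = ((b%:R ^- m : R))%:E)
  (j : Sig b) (y x : R) (hx : 0 <= x < 1) (n : nat) (r : R) (hr : 0 < r) :
  let p := (j, y, x) in
  mu b gamma phi P x (BT b p r `&` Part b n.+1 p) =
  (((b%:R)^-1 : R)%:E *
  mu b gamma phi P ((x + (j 0%N : nat)%:R) / b%:R)
     (BT b (G b gamma phi p) (r / gamma) `&` Part b n (G b gamma phi p)))%E.
Proof.
move=> p; rewrite /p /mu /G /BT /Part /=.
set c := j 0%N.
set x1 := (x + (c : nat)%:R) / b%:R.
have b0 : (0 < b%:R :> R) by rewrite ltr0n; case: b hb {P hP j p c x1}.
have g0 : 0 < gamma by case/andP: hgamma.
have hx1 : (0 <= x1 < 1)%R.
  have hc : ((c : nat).+1 <= b)%N.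
    have := ltn_ord c; move: (c : nat) => k; rewrite prednK //; exact: ltnW.
  have hc' : ((c : nat)%:R + 1 <= b%:R :> R) by rewrite natr1 ler_nat.
  case/andP: hx => hx0 hx1.
  rewrite /x1 divr_ge0 ?ler0n ?addr_ge0 //= ?ler0n ?ltW //.
  rewrite ltr_pdivrMr // mul1r; lra.
set A := (X in (_ * P X)%E).
have mA : measurable A.
  have -> : A = [set: SigM b] `&` (Sfun b gamma phi x1 @^-1`
      [set` `[(y - phi x1) / gamma - r / gamma, (y - phi x1) / gamma + r / gamma]%R])
      `&` cyl b n (Defs.shift b j).
    apply/seteqP; split => [j0 [[_ h1] [_ h2]]|j0 [[_ h1] h2]].
      split => //; split => //=; rewrite in_itv /=; rewrite distrC ler_distl in h1; exact: h1.
    split; split => //; rewrite distrC ler_distl; move: h1 => /=; rewrite in_itv /=; exact.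
  apply: measurableI; last exact: cyl_meas.
  apply: (@Sfun_meas R b gamma phi hgamma hper hlip x1) => //; exact: measurable_itv.
have habs : forall S, (`|(y - phi x1)/gamma - S| <= r/gamma) =
    (`|y - (phi x1 + gamma * S)| <= r).
  move=> S; rewrite (_ : (y - phi x1)/gamma - S = (y - (phi x1 + gamma*S)) / gamma); last first.
    by field; rewrite gt_eqF.
  by rewrite normrM normfV (gtr0_norm g0) ler_pM2r // invr_gt0.
have hSf : forall j0 : Sig b, j0 0%N = c ->
    Sfun b gamma phi x j0 = phi x1 + gamma * Sfun b gamma phi x1 (Defs.shift b j0).
  by move=> j0 e; rewrite (@Sfun_shift R b hb gamma phi hgamma hper hlip x j0) e.
rewrite -(@key R b hb P hP c A mA); congr (P _).
apply/seteqP; split => [j0 [[_ h1] [_ h2]]|j0 [h0 [[_ h1] [_ h2]]]].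
  have e0 : j0 0%N = c by rewrite h2.
  split => //; split; split => //.
    by rewrite habs -hSf.
  by move=> k hk; rewrite /Defs.shift h2.
split; split => //.
  by rewrite hSf // -habs.
by case => [|k] hk; [rewrite h0|exact: (h2 k)].
Qed.
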